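(* Let $m$ be a positive integer and let $C$ be a ternary near-extremal self-dual code of length $12m$. Let $A_{3m}$ denote the number of codewords of weight $3m$ in $C$. Then $A_{3m}\equiv 0 \pmod 8$.
   Context: A ternary code of length $n$ is a linear subspace of $\mathbb{F}_3^n$. Its dual is $C^\perp=\{x\in\mathbb{F}_3^n : \sum_{k=1}^n x_k y_k = 0 \text{ for all } y\in C\}$, and $C$ is self-dual if $C=C^\perp$. The weight of a vector is the number of its nonzero coordinates. A ternary self-dual code of length $n$ is near-extremal if its minimum (nonzero) weight equals $3\lfloor n/12\rfloor$; for length $12m$ this is $3m$. *)

(* Defs.v *)
From HB Require Import structures.
From mathcomp Require Import all_boot all_order all_algebra.
Set Implicit Arguments. Unset Strict Implicit. Unset Printing Implicit Defensive.
Import GRing.Theory.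
Local Open Scope ring_scope.

Notation F3 := 'F_3.
Definition ternary_code (n : nat) := {vspace 'rV[F3]_n}.

Definition tdot n (x y : 'rV[F3]_n) : F3 := \sum_(k < n) x 0 k * y 0 k.

Definition in_dual n (C : ternary_code n) (x : 'rV[F3]_n) : bool :=
  [forall y : 'rV[F3]_n, (y \in C) ==> (tdot x y == 0)].

Definition self_dual n (C : ternary_code n) : Prop :=
  forall x : 'rV[F3]_n, (x \in C) = in_dual C x.

Definition wt n (x : 'rV[F3]_n) : nat := #|[set k : 'I_n | x 0 k != 0]|.

Definition min_weight_eq n (C : ternary_code n) (d : nat) : Prop :=
  (exists2 x, (x \in C) && (x != 0) & wt x = d) /\
  (forall x, x \in C -> x != 0 -> (d <= wt x)%N).

Definition near_extremal n (C : ternary_code n) : Prop :=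
  self_dual C /\ min_weight_eq C (3 * (n %/ 12)).

Definition A_w n (C : ternary_code n) (w : nat) : nat :=
  #|[set x : 'rV[F3]_n | (x \in C) && (wt x == w)]|.

(* Main.v *)
Require Import Defs.
From mathcomp Require Import all_boot all_order all_algebra.
From mathcomp Require Import ring zify.
Set Warnings "-notation-overridden -ambiguous-paths -deprecated-syntactic-definition-since-mathcomp-2.4.0".
Set Implicit Arguments. Unset Strict Implicit. Unset Printing Implicit Defensive.
Import GRing.Theory Num.Theory.
Local Open Scope ring_scope.


Lemma F3_cases (a : F3) : [|| a == 0, a == 1 | a == 2].
Proof. by case: a => [[|[|[|]]] //=]. Qed.

Lemma F3_nz_cases (a : F3) : a != 0 -> a = 1 \/ a = 2.
Proof. by case/or3P: (F3_cases a) => /eqP ->; auto. Qed.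

Lemma sum_indic (T : finType) (V : {set T}) (P : pred T) :
  (\sum_(v in V) (P v : nat))%N = #|[set v in V | P v]|.
Proof.
rewrite -big_mkcondr /= -sum1_card; by apply: eq_bigl => v; rewrite !inE.
Qed.

Lemma fiber3 (n : nat) (V : {set 'rV[F3]_n}) (phi : 'rV[F3]_n -> F3) :
  (forall u v, u \in V -> v \in V -> u + v \in V) ->
  (forall u v, phi (u + v) = phi u + phi v) ->
  (exists2 v0, v0 \in V & phi v0 != 0) ->
  (3 * #|[set v in V | phi v == 0%R]| = #|V|)%N.
Proof.
move=> VD phiD [v0 v0V nz0].
have [v1 v1V phi1] : exists2 v1, v1 \in V & phi v1 = 1.
  case: (F3_nz_cases nz0) => h; first by exists v0.
  exists (v0 + v0); first exact: VD.
  by rewrite phiD h; apply/eqP.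
pose fib a := [set v in V | phi v == a].
have le a : (#|fib a| <= #|fib (a + 1)%R|)%N.
  rewrite -(card_imset _ (addIr v1)); apply: subset_leq_card.
  apply/subsetP => _ /imsetP [v + ->]; rewrite !inE => /andP [vV /eqP pv].
  by rewrite VD //= phiD pv phi1.
have e3 : (1 + 1 + 1 : F3) = 0 by apply/eqP.
have l0 : (#|fib 0%R| <= #|fib 1%R|)%N by have := le 0%R; rewrite add0r.
have l1 : (#|fib 1%R| <= #|fib (1 + 1)%R|)%N := le 1%R.
have l2 : (#|fib (1 + 1)%R| <= #|fib 0%R|)%N by have := le (1 + 1); rewrite e3.
have e1 : #|fib 0| = #|fib 1|.
  by apply/eqP; rewrite eqn_leq l0 (leq_trans l1 l2).
have e2 : #|fib 1| = #|fib (1 + 1)|.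
  by apply/eqP; rewrite eqn_leq l1 (leq_trans l2 l0).
have cV : #|V| = (#|fib 0%R| + #|fib 1%R| + #|fib (1 + 1)%R|)%N.
  rewrite -!sum_indic -!big_split /= -sum1_card.
  apply: eq_bigr => v _.
  by case/or3P: (F3_cases (phi v)) => /eqP ->.
by rewrite cV -e2 -e1 mulSn mul2n -addnn addnA.
Qed.

Definition supp n (y : 'rV[F3]_n) : {set 'I_n} := [set k | y 0 k != 0].
Definition Yset n (T : {set 'I_n}) := [set y : 'rV[F3]_n | supp y \subset T].

Lemma Yset_add n (T : {set 'I_n}) u v : u \in Yset T -> v \in Yset T -> u + v \in Yset T.
Proof.
rewrite !inE => /subsetP su /subsetP sv; apply/subsetP => k; rewrite !inE mxE => h.
apply: contraT => kT.
have u0 : u 0 k = 0 by apply/eqP; apply: contraNT kT => nz; apply: su; rewrite inE.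
have v0 : v 0 k = 0 by apply/eqP; apply: contraNT kT => nz; apply: sv; rewrite inE.
by move: h; rewrite u0 v0 addr0 eqxx.
Qed.

Lemma cardY n (T : {set 'I_n}) : #|Yset T| = (3 ^ #|T|)%N.
Proof.
move: {2}#|T| (erefl #|T|) => s; elim: s T => [|s IH] T cT.
  have -> : T = set0 by apply/eqP; rewrite -cards_eq0 cT.
  suff -> : Yset set0 = [set (0 : 'rV[F3]_n)] by rewrite cards1 cards0.
  apply/setP => y; rewrite !inE subset0; apply/eqP/eqP => [|->]; last first.
    by apply/setP => k; rewrite !inE mxE eqxx.
  move=> h; apply/rowP => k; rewrite mxE; apply/eqP; apply: contraT => nz.
  by have := in_set0 k; rewrite -h inE nz.
have [k kT] : exists k, k \in T.
  by apply/set0Pn; rewrite -cards_eq0 cT.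
have cT' : #|T :\ k| = s by move: (cardsD1 k T); rewrite kT cT add1n => [[]].
have Yfib : [set y in Yset T | y 0 k == 0] = Yset (T :\ k).
  apply/setP => y; rewrite !inE; apply/andP/subsetP => [[/subsetP sT /eqP y0] j|sT].
    rewrite !inE => nz; rewrite sT ?inE // andbT; apply: contraNneq nz => ->.
    by rewrite y0.
  split; first by apply/subsetP => j /sT; rewrite !inE => /andP [].
  by apply: contraT => nz; have := sT k; rewrite !inE nz eqxx => /(_ isT).
rewrite -(@fiber3 _ (Yset T) (fun y => y 0 k)).
- by rewrite Yfib IH // cT expnS cT'.

- by move=> u v; apply: Yset_add.
- by move=> u v; rewrite mxE.
exists (delta_mx 0 k); last by rewrite mxE !eqxx.
rewrite inE; apply/subsetP => j; rewrite inE mxE eqxx /=.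
by case: (j =P k) => [-> //|_]; rewrite eqxx.
Qed.

Definition Cset n (C : ternary_code n) := [set c : 'rV[F3]_n | c \in C].
Definition aS n (C : ternary_code n) (S : {set 'I_n}) :=
  #|[set c : 'rV[F3]_n | (c \in C) && (supp c \subset S)]|.

Lemma tdotC n (x y : 'rV[F3]_n) : tdot x y = tdot y x.
Proof. by apply: eq_bigr => k _; rewrite mulrC. Qed.

Lemma tdotDr n (x u v : 'rV[F3]_n) : tdot x (u + v) = tdot x u + tdot x v.
Proof. by rewrite /tdot -big_split; apply: eq_bigr => k _; rewrite mxE mulrDr. Qed.

Lemma tdot_delta n (x : 'rV[F3]_n) k : tdot x (delta_mx 0 k) = x 0 k.
Proof.
rewrite /tdot (bigD1 k) //= big1 ?addr0 => [|j jk]; first by rewrite mxE !eqxx mulr1.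
by rewrite mxE eqxx (negbTE jk) mulr0.
Qed.

Lemma double_count n (C : ternary_code n) (S : {set 'I_n}) :
  self_dual C ->
  (aS C S * 3 ^ #|~: S| = #|Cset C| * aS C (~: S))%N.
Proof.
move=> sd.
set T := ~: S.
pose cnt1 c := #|[set y in Yset T | tdot c y == 0]|.
pose cnt2 y := #|[set c in Cset C | tdot c y == 0]|.
have dc : (\sum_(c in Cset C) cnt1 c = \sum_(y in Yset T) cnt2 y)%N.
  rewrite /cnt1 /cnt2 -!(eq_bigr _ (fun _ _ => sum_indic _ _)).
  by rewrite exchange_big.
have h1 c : c \in Cset C -> (3 * cnt1 c = #|Yset T| + 2 * #|Yset T| * (supp c \subset S))%N.
  move=> cC; rewrite /cnt1; case: (boolP (supp c \subset S)) => sc.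
    have -> : [set y in Yset T | tdot c y == 0] = Yset T.
      apply/setP => y; rewrite !inE andb_idr // => /subsetP sy.
      rewrite /tdot big1 // => k _.
      case: (boolP (k \in S)) => kS.
        have : k \notin supp y by apply: contraL kS => /sy; rewrite inE.
        by rewrite inE negbK => /eqP ->; rewrite mulr0.
      have : k \notin supp c by apply: contra kS => /(subsetP sc).
      by rewrite inE negbK => /eqP ->; rewrite mul0r.
    by rewrite muln1 mulSn mul2n -addnn.
  rewrite muln0 addn0; apply: fiber3.
  - by move=> u v; apply: Yset_add.
  - by move=> u v; apply: tdotDr.
  have [k kc kS] : exists2 k, k \in supp c & k \notin S.
    by move/subsetPn: sc => [k ? ?]; exists k.
  exists (delta_mx 0 k); last by rewrite tdot_delta; rewrite inE in kc.
  rewrite inE; apply/subsetP => j; rewrite inE mxE eqxx /=.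
  by case: (j =P k) => [->|_]; [rewrite inE|rewrite eqxx].
have h2 y : y \in Yset T -> (3 * cnt2 y = #|Cset C| + 2 * #|Cset C| * (y \in C))%N.
  move=> yT; rewrite /cnt2; case: (boolP (y \in C)) => yC.
    have -> : [set c in Cset C | tdot c y == 0] = Cset C.
      apply/setP => c; rewrite !inE andb_idr // => cC.
      move: yC; rewrite sd => /forallP /(_ c); rewrite cC /= tdotC; exact.
    by rewrite muln1 mulSn mul2n -addnn.
  rewrite muln0 addn0; apply: fiber3.
  - by move=> u v; rewrite !inE; apply: memvD.
  - by move=> u v; rewrite tdotC tdotDr tdotC [tdot y v]tdotC.
  move: yC; rewrite sd => /forallPn [c0]; rewrite negb_imply => /andP [c0C nz].
  by exists c0; rewrite ?inE // tdotC.
have e1 : (3 * \sum_(c in Cset C) cnt1 c = #|Cset C| * #|Yset T| + 2 * #|Yset T| * aS C S)%N.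
  rewrite big_distrr /= (eq_bigr _ h1) big_split /= sum_nat_const -big_distrr /=.
  congr (_ + _)%N; congr (_ * _)%N; rewrite sum_indic /aS; apply: eq_card => c.
  by rewrite !inE.
have e2 : (3 * \sum_(y in Yset T) cnt2 y = #|Yset T| * #|Cset C| + 2 * #|Cset C| * aS C T)%N.
  rewrite big_distrr /= (eq_bigr _ h2) big_split /= sum_nat_const -big_distrr /=.
  congr (_ + _)%N; congr (_ * _)%N; rewrite sum_indic /aS; apply: eq_card => c.
  rewrite !inE; apply/andP/andP => [[/subsetP sc cC]|[cC /subsetP sc]]; split => //.
  - by apply/subsetP => k /sc; rewrite inE.
  - by apply/subsetP => k /sc; rewrite inE.
move: e1; rewrite dc e2 mulnC => /addnI /eqP; rewrite -!mulnA eqn_mul2l /= => /eqP.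
by move=> ->; rewrite cardY mulnC.
Qed.

Lemma prod_if_set (R : comRingType) (I : finType) (J : {set I}) (a b : R) :
  \prod_i (if i \in J then a else b) = a ^+ #|J| * b ^+ #|~: J|.
Proof.
rewrite (bigID (fun i => i \in J)) /=; congr (_ * _).
  by rewrite (eq_bigr (fun _ => a)) ?prodr_const // => i ->.
rewrite (eq_bigr (fun _ => b)) => [|i /negbTE -> //].
by rewrite -prodr_const; apply: eq_bigl => i; rewrite inE.
Qed.

Lemma subset_sum (R : comRingType) (I : finType) (A D : {set I}) (x y : R) :
  [disjoint A & D] ->
  \sum_(S : {set I} | (A \subset S) && [disjoint S & D]) x ^+ #|~: S| * y ^+ #|S|
  = y ^+ #|A| * x ^+ #|D| * (x + y) ^+ #|~: (A :|: D)|.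
Proof.
move=> dAD.
pose F i := if i \in D then 0 else y.
pose G i := if i \in A then 0 else x.
have lhs : \prod_i (F i + G i) = y ^+ #|A| * x ^+ #|D| * (x + y) ^+ #|~: (A :|: D)|.
  rewrite (bigID (fun i => i \in A)) /= (bigID (fun i => i \in D) (fun i => i \notin A)) /=.
  rewrite mulrA; congr (_ * _ * _).
  - rewrite (eq_bigr (fun _ => y)) ?prodr_const // => i iA.
    have iD : i \notin D by rewrite (disjointFr dAD iA).
    by rewrite /F /G (negbTE iD) iA addr0.
  - rewrite (eq_bigr (fun _ => x)) => [|i /andP [iA iD]]; last first.
      by rewrite /F /G iD (negbTE iA) add0r.
    rewrite prodr_const; congr (_ ^+ _); apply: eq_card => i; rewrite unfold_in /= andbC.
    by case: (boolP (i \in D)) => //= iD; rewrite (disjointFl dAD iD).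
  - rewrite (eq_bigr (fun _ => x + y)) => [|i /andP [iA iD]]; last first.
      by rewrite /F /G (negbTE iD) (negbTE iA) addrC.
    by rewrite prodr_const; congr (_ ^+ _); apply: eq_card => i; rewrite unfold_in /= !inE negb_or.
rewrite -lhs bigA_distr big_mkcond /=; apply: eq_bigr => S _.
case: ifP => [/andP [sAS dSD]|].
  rewrite mulrC -prod_if_set; apply: eq_bigr => i _.
  case: ifP => iS; rewrite /F /G.
    by rewrite (disjointFr dSD iS).
  by have := subsetP sAS i; rewrite iS; case: (i \in A) => // /(_ isT).
move/negbT; rewrite negb_and => /orP [/subsetPn [i iA iS]|/pred0Pn [i /andP [iS iD]]].
  by rewrite (bigD1 i) //= (negbTE iS) /G iA mul0r.
have iS' : i \in S := iS; have iD' : i \in D := iD.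
by rewrite (bigD1 i) //= iS' /F iD' mul0r.
Qed.

Lemma coef_lowsum (L : nat) (k : nat -> int) (v : nat -> {poly int}) t :
  (forall l, (l < t)%N -> k l = 0) -> (t < L)%N ->
  (\sum_(l < L) k l *: ('X^l * v l))`_t = k t * (v t)`_0.
Proof.
move=> k0 tL; rewrite coef_sum (bigD1 (Ordinal tL)) //= big1 ?addr0.
  by rewrite coefZ coefXnM ltnn subnn.
move=> l /eqP lt; rewrite coefZ coefXnM.
case: ltnP => [//|tl]; first by rewrite mulr0.
have lt' : (l < t)%N by rewrite ltn_neqAle tl andbT; apply/eqP => h; apply: lt; apply: val_inj.
by rewrite k0 // mul0r.
Qed.

Lemma low (L : nat) (k : nat -> int) (v : nat -> {poly int}) T :
  (forall l, (v l)`_0 != 0) -> (T <= L)%N ->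
  (forall t, (t < T)%N -> (\sum_(l < L) k l *: ('X^l * v l))`_t = 0) ->
  forall l, (l < T)%N -> k l = 0.
Proof.
move=> v0 TL h0; elim/ltn_ind => l IH lT.
have := h0 l lT; rewrite coef_lowsum.
- by move/eqP; rewrite mulf_eq0 (negbTE (v0 l)) orbF => /eqP.
- by move=> l' l'l; apply: IH => //; apply: ltn_trans lT.
by apply: leq_trans TL.
Qed.

Definition upoly : {poly int} := 3 + 3 * 'X + 'X ^+ 2.
Definition vpoly (l : nat) : {poly int} := (1 + 'X) ^+ 2 * upoly ^+ l.

Lemma vpoly0 l : (vpoly l)`_0 = 3 ^+ l.
Proof.
rewrite -horner_coef0 /vpoly /upoly !hornerE /=.
by [].
Qed.

Lemma cube1X : (1 + 'X) ^+ 3 = 1 + 'X * upoly :> {poly int}.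
Proof. rewrite /upoly; ring. Qed.

Lemma expand_w (q : nat) (a : int) (L : nat) : (q < L)%N ->
  a *: (1 + 'X) ^+ (3 * q + 2) =
  \sum_(l < L) (a * ('C(q, l))%:R) *: ('X^l * vpoly l).
Proof.
move=> qL.
rewrite exprD exprM cube1X exprDn.
rewrite (big_ord_widen L (fun l => 1 ^+ (q - l) * ('X * upoly) ^+ l *+ 'C(q, l))) //.
rewrite mulr_suml scaler_sumr big_mkcond /=; apply: eq_bigr => l _.
case: ifP => lq; last first.
  rewrite bin_small; first by rewrite mulr0 scale0r.
  by rewrite ltnNge -ltnS lq.
rewrite /vpoly expr1n mul1r exprMn -mulr_natl -!mul_polyC rmorphM /= rmorph_nat; ring.
Qed.

Lemma key (m : nat) (e : nat -> int) (M : int) :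
  (0 < m)%N -> 0 < M ->
  (forall w, e w != 0 -> [&& 3 %| w, 3 * m <= w & w < 12 * m]%N) ->
  (-3) *: (\sum_(w < 12 * m) e w *: ('X^w * (3 + 'X) ^+ (12 * m - 1 - w)))
    = M *: ('X * \sum_(w < 12 * m) e w *: ((1 + 'X) ^+ (12 * m - 1 - w))) ->
  e (3 * m) = 0.
Proof.
move=> m0 M0 esupp eq.
pose G := \sum_(w < 12 * m) e w *: ('X^w * (3 + 'X) ^+ (12 * m - 1 - w)).
pose H := \sum_(w < 12 * m) e w *: ((1 + 'X) ^+ (12 * m - 1 - w)).
have {}eq : (-3) *: G = M *: ('X * H) by exact: eq.
have eq0 w : (~~ [&& 3 %| w, 3 * m <= w & w < 12 * m])%N -> e w = 0.
  by move=> h; apply/eqP; apply: contraNT h; apply: esupp.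
have G0 t : (t < 3 * m)%N -> G`_t = 0.
  move=> tm; rewrite coef_sum big1 // => w _; rewrite coefZ coefXnM.
  case: ltnP => tw; first by rewrite mulr0.
  by rewrite eq0 ?mul0r //; apply/negP => /and3P [_ h _]; move: tw h; lia.
have G3 : G`_(3 * m) = e (3 * m) * 3 ^+ (12 * m - 1 - 3 * m).
  have m3 : (3 * m < 12 * m)%N by lia.
  rewrite coef_sum (bigD1 (Ordinal m3)) //= big1 ?addr0.
    rewrite coefZ coefXnM ltnn subnn -horner_coef0 !hornerE /=.
    by [].
  move=> w /eqP wn; rewrite coefZ coefXnM.
  case: ltnP => tw; first by rewrite mulr0.
  rewrite eq0 ?mul0r //; apply/negP => /and3P [_ h _].
  by apply: wn; apply: val_inj => /=; lia.
have coefeq t : - 3 * G`_t.+1 = M * H`_t.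
  by have := f_equal (fun p : {poly int} => p`_t.+1) eq; rewrite /= !coefZ coefXM.
have H0 t : (t < 3 * m - 1)%N -> H`_t = 0.
  move=> tm; have := coefeq t; rewrite G0; last by lia.
  by rewrite mulr0 => /esym/eqP; rewrite mulf_eq0 (negbTE (lt0r_neq0 M0)) /= => /eqP.
have H3 : - 3 * (e (3 * m) * 3 ^+ (12 * m - 1 - 3 * m)) = M * H`_(3 * m - 1).
  have := coefeq (3 * m - 1)%N; have -> : (3 * m - 1).+1 = (3 * m)%N by lia.
  by rewrite G3.
pose q w := (4 * m - 1 - w %/ 3)%N.
pose k l := \sum_(w < 12 * m) e w * ('C(q w, l))%:R.
have Hexp : H = \sum_(l < 3 * m) k l *: ('X^l * vpoly l).
  have ew (w : 'I_(12 * m)) : e w *: (1 + 'X) ^+ (12 * m - 1 - w) =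
      \sum_(l < 3 * m) (e w * ('C(q w, l))%:R) *: ('X^l * vpoly l).
    case: (boolP (e w == 0)) => [/eqP ->|/esupp /and3P [w3 wm wn]].
      by rewrite scale0r big1 // => l _; rewrite mul0r scale0r.
    have -> : (12 * m - 1 - w = 3 * q w + 2)%N by rewrite /q; lia.
    by apply: expand_w; rewrite /q; lia.
  rewrite /H (eq_bigr _ (fun w _ => ew w)) exchange_big /=.
  by apply: eq_bigr => l _; rewrite scaler_suml.
have k0 : forall l, (l < 3 * m - 1)%N -> k l = 0.
  apply: (@low (3 * m) k vpoly).
  - by move=> l; rewrite vpoly0 expf_neq0.
  - by lia.
  by move=> t tm; rewrite -Hexp H0.
have Hk : H`_(3 * m - 1) = k (3 * m - 1)%N * 3 ^+ (3 * m - 1).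
  by rewrite Hexp coef_lowsum ?vpoly0 //; lia.
have ke : k (3 * m - 1)%N = e (3 * m).
  have m3 : (3 * m < 12 * m)%N by lia.
  rewrite /k (bigD1 (Ordinal m3)) //= big1 ?addr0.
    have -> : q (3 * m)%N = (3 * m - 1)%N by rewrite /q; lia.
    by rewrite binn mulr1.
  move=> w /eqP wn; case: (boolP (e w == 0)) => [/eqP ->|/esupp /and3P [w3 wm wl]].
    by rewrite mul0r.
  rewrite bin_small ?mulr0 //; rewrite /q.
  have : (nat_of_ord w != 3 * m)%N by apply/eqP => h; apply: wn; apply: val_inj.
  by lia.
move: H3; rewrite Hk ke => /eqP; rewrite -subr_eq0.
have -> : - 3 * (e (3 * m) * 3 ^+ (12 * m - 1 - 3 * m)) - M * (e (3 * m) * 3 ^+ (3 * m - 1))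
  = - (e (3 * m) * (3 * 3 ^+ (12 * m - 1 - 3 * m) + M * 3 ^+ (3 * m - 1))) by ring.
rewrite oppr_eq0 mulf_eq0 => /orP [/eqP //|].
have pos : 0 < 3 * 3 ^+ (12 * m - 1 - 3 * m) + M * 3 ^+ (3 * m - 1) :> int.
  by rewrite addr_gt0 ?mulr_gt0 ?exprn_gt0.
by rewrite (negbTE (lt0r_neq0 pos)).
Qed.

Lemma sum_bool_mul (R : comRingType) (T : finType) (P Q : pred T) (F : T -> R) :
  \sum_(x | P x) (Q x)%:R * F x = \sum_(x | P x && Q x) F x.
Proof.
by rewrite big_mkcondr /=; apply: eq_bigr => x _; case: (Q x); rewrite ?mul1r ?mul0r.
Qed.

Lemma disj0 (T : finType) (S : {set T}) : [disjoint S & set0].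
Proof. by rewrite -setI_eq0 setI0. Qed.

Lemma aS_sum (R : comRingType) n (C : ternary_code n) S :
  (aS C S)%:R = \sum_(c in Cset C) (supp c \subset S)%:R :> R.
Proof.
rewrite -natr_sum sum_indic /aS; congr (_ %:R); apply: eq_card => c; by rewrite !inE.
Qed.

Lemma per_i n (C : ternary_code n) (i : 'I_n) : self_dual C ->
  \sum_(c in Cset C) 'X ^+ #|i |: supp c| * (3 + 'X) ^+ #|~: (i |: supp c)|
  = (#|Cset C|)%:R * \sum_(c in Cset C | c 0 i == 0)
        'X * ('X + 1) ^+ #|~: (supp c :|: [set i])| :> {poly int}.
Proof.
move=> sd.
have E0 : \sum_(S : {set 'I_n} | i \in S) (aS C S)%:R * 3 ^+ #|~: S| * 'X ^+ #|S|
   = \sum_(S : {set 'I_n} | i \in S) (#|Cset C| * aS C (~: S))%:R * 'X ^+ #|S| :> {poly int}.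
  by apply: eq_bigr => S _; rewrite -double_count // natrM natrX.
have L : \sum_(S : {set 'I_n} | i \in S) (aS C S)%:R * 3 ^+ #|~: S| * 'X ^+ #|S|
   = \sum_(c in Cset C) 'X ^+ #|i |: supp c| * (3 + 'X) ^+ #|~: (i |: supp c)| :> {poly int}.
  under eq_bigr => S _ do rewrite aS_sum mulr_suml mulr_suml.
  rewrite exchange_big /=; apply: eq_bigr => c _.
  under eq_bigr => S _ do rewrite -mulrA.
  rewrite sum_bool_mul.
  transitivity (\sum_(S : {set 'I_n} | (i |: supp c \subset S) && [disjoint S & set0])
      3 ^+ #|~: S| * 'X ^+ #|S| : {poly int}).
    by apply: eq_bigl => S; rewrite subUset sub1set disj0 andbT.
  by rewrite subset_sum ?disj0 // cards0 expr0 mulr1 setU0.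
have R : \sum_(S : {set 'I_n} | i \in S) (#|Cset C| * aS C (~: S))%:R * 'X ^+ #|S|
   = (#|Cset C|)%:R * \sum_(c in Cset C | c 0 i == 0)
        'X * ('X + 1) ^+ #|~: (supp c :|: [set i])| :> {poly int}.
  rewrite (reindex_inj (@setC_inj _)) /=.
  under eq_bigr => S _ do rewrite setCK natrM aS_sum -mulrA mulr_suml.
  rewrite -mulr_sumr exchange_big /=; congr (_ * _).
  rewrite big_mkcondr /=; apply: eq_bigr => c _.
  case: ifP => ci.
    rewrite sum_bool_mul.
    transitivity (\sum_(S : {set 'I_n} | (supp c \subset S) && [disjoint S & [set i]])
      'X ^+ #|~: S| * 1 ^+ #|S| : {poly int}).
      apply: eq_big => S; first by rewrite disjoint_sym disjoints1 inE andbC.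
      by move=> _; rewrite expr1n mulr1.
    rewrite subset_sum; last by rewrite disjoint_sym disjoints1 inE negbK.
    by rewrite cards1 expr1n mul1r expr1.
  rewrite sum_bool_mul big_pred0 // => S; rewrite inE.
  case: (boolP (i \in S)) => //= iS; apply/negbTE/negP.
  by move=> /subsetP /(_ i); rewrite inE ci (negbTE iS) => /(_ isT).
by rewrite -L E0 R.
Qed.

Lemma wt_supp n (c : 'rV[F3]_n) : wt c = #|supp c|.
Proof. by []. Qed.

Lemma wt_lt n (c : 'rV[F3]_n) i : c 0 i = 0 -> (wt c < n)%N.
Proof.
move=> ci; have sub : supp c \subset [set~ i].
  by apply/subsetP => k; rewrite !inE; apply: contraNneq => ->; rewrite ci.
have := subset_leq_card sub; rewrite cardsC1 card_ord wt_supp.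
by case: n i c {ci sub} => [[]//|n' _] /=.
Qed.

Lemma wt_le n (c : 'rV[F3]_n) : (wt c <= n)%N.
Proof. by rewrite wt_supp; apply: leq_trans (max_card _) _; rewrite card_ord. Qed.

Lemma term_i n (c : 'rV[F3]_n) i :
  'X ^+ #|i |: supp c| * (3 + 'X) ^+ #|~: (i |: supp c)| =
  'X ^+ (wt c) * (3 + 'X) ^+ (n - wt c)
  - (c 0 i == 0)%:R * (3 * ('X ^+ (wt c) * (3 + 'X) ^+ (n - 1 - wt c))) :> {poly int}.
Proof.
rewrite [#|~: _|]cardsCs setCK cardsU1 card_ord -wt_supp inE negbK.
case: (boolP (c 0 i == 0)) => ci /=.
  rewrite add1n; have lt := wt_lt (eqP ci).
  have -> : (n - wt c = (n - 1 - wt c).+1)%N by lia.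
  have e1 : (n - (wt c).+1 = n - 1 - wt c)%N by lia.
  rewrite e1 mul1r !exprS; ring.
by rewrite add0n /= mul0r subr0.
Qed.

Definition alpha n (C : ternary_code n) (i : 'I_n) (w : nat) :=
  #|[set c in Cset C | (c 0 i == 0) && (wt c == w)]|.

Lemma partition_wt n (C : ternary_code n) (i : 'I_n) (F : nat -> {poly int}) :
  \sum_(c in Cset C | c 0 i == 0) F (wt c) =
  \sum_(w < n) ((alpha C i w)%:R : int) *: F w.
Proof.
transitivity (\sum_(c in Cset C | c 0 i == 0) \sum_(w < n) (((wt c == w) : nat)%:R : int) *: F w).
  apply: eq_bigr => c /andP [_ /eqP ci].
  rewrite (bigD1 (Ordinal (wt_lt ci))) //= eqxx scale1r big1 ?addr0 // => w /eqP wn.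
  case: eqP => h; last by rewrite scale0r.
  by exfalso; apply: wn; apply: val_inj.
rewrite exchange_big /=; apply: eq_bigr => w _.
rewrite -scaler_suml -natr_sum; congr (_%:R *: _).
rewrite /alpha -sum_indic big_mkcondr /=; apply: eq_bigr => c _.
by case: (c 0 i == 0).
Qed.

Lemma per_i_w n (C : ternary_code n) (i : 'I_n) : self_dual C ->
  \sum_(c in Cset C) 'X ^+ (wt c) * (3 + 'X) ^+ (n - wt c)
  - (3 : int) *: \sum_(w < n) ((alpha C i w)%:R : int) *: ('X ^+ w * (3 + 'X) ^+ (n - 1 - w))
  = ((#|Cset C|)%:R : int) *: ('X * \sum_(w < n) ((alpha C i w)%:R : int) *: ((1 + 'X) ^+ (n - 1 - w))).
Proof.
move=> sd; have := per_i i sd.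
under eq_bigr => c _ do rewrite term_i.
rewrite sumrB sum_bool_mul.
have P1 : \sum_(c in Cset C | c 0 i == 0) 'X ^+ (wt c) * (3 + 'X) ^+ (n - 1 - wt c)
   = \sum_(w < n) ((alpha C i w)%:R : int) *: ('X ^+ w * (3 + 'X) ^+ (n - 1 - w))
   := partition_wt C i (fun w => 'X ^+ w * (3 + 'X) ^+ (n - 1 - w)).
have P2 : \sum_(c in Cset C | c 0 i == 0) 'X * ('X + 1) ^+ #|~: (supp c :|: [set i])|
   = 'X * \sum_(w < n) ((alpha C i w)%:R : int) *: ((1 + 'X) ^+ (n - 1 - w)).
  transitivity ('X * \sum_(c in Cset C | c 0 i == 0) (1 + 'X) ^+ (n - 1 - wt c) : {poly int}).
    rewrite mulr_sumr; apply: eq_bigr => c /andP [_ ci]; rewrite addrC; congr (_ * _ ^+ _).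
    rewrite [#|~: _|]cardsCs setCK setUC cardsU1 card_ord inE ci /= -wt_supp.
    by have := wt_lt (eqP ci); lia.
  by congr (_ * _); exact: (partition_wt C i (fun w => (1 + 'X) ^+ (n - 1 - w))).
rewrite P2 -mulr_sumr P1 => h.
by rewrite -!mul_polyC !rmorph_nat.
Qed.

Lemma sq_F3 (a : F3) : a * a = (a != 0)%:R.
Proof. by case/or3P: (F3_cases a) => /eqP ->; apply/eqP. Qed.

Lemma wt3 n (C : ternary_code n) c : self_dual C -> c \in C -> (3 %| wt c)%N.
Proof.
move=> sd cC; have := cC; rewrite sd => /forallP /(_ c); rewrite cC /= => /eqP h.
rewrite (dvdn_pcharf (pchar_Fp (isT : prime 3))).
have -> : wt c = (\sum_(k in [set: 'I_n]) ((c 0%R k != 0%R) : nat))%N.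
  by rewrite sum_indic /wt; apply: eq_card => k; rewrite !inE.
rewrite natr_sum; apply/eqP; transitivity (tdot c c); last exact: h.
by rewrite /tdot; apply: eq_big => [k|k _]; [rewrite inE | rewrite sq_F3].
Qed.

Lemma wt0 n (c : 'rV[F3]_n) : wt c = 0%N -> c = 0.
Proof.
move=> /eqP; rewrite cards_eq0 => /eqP h; apply/rowP => k; rewrite mxE.
apply/eqP; apply: contraT => nz; have : k \in [set k | c 0 k != 0] by rewrite inE.
by rewrite h inE.
Qed.

Lemma wt_0 n : wt (0 : 'rV[F3]_n) = 0%N.
Proof. by apply/eqP; rewrite cards_eq0; apply/eqP/setP => k; rewrite !inE mxE eqxx. Qed.

Lemma alpha_small n (C : ternary_code n) (i : 'I_n) (d w : nat) :
  self_dual C -> (forall x, x \in C -> x != 0 -> (d <= wt x)%N) ->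
  ~~ [&& 3 %| w, d <= w & w < n]%N -> alpha C i w = (w == 0)%N.
Proof.
move=> sd md cond; rewrite /alpha.
case: (posnP w) => [->|wpos].
  suff -> : [set c in Cset C | (c 0 i == 0) && (wt c == 0%N)] = [set (0 : 'rV[F3]_n)].
    by rewrite cards1.
  apply/setP => c; rewrite !inE.
  apply/idP/eqP => [/and3P [_ _ /eqP /wt0 //]|->]; by rewrite mem0v mxE eqxx wt_0.
change (#|[set c in Cset C | (c 0 i == 0) && (wt c == w)]| = 0%N).
apply/eqP; rewrite cards_eq0; apply/eqP/setP => c.
rewrite !inE; apply/negbTE; apply/negP => /and3P [cC ci /eqP wc].
move: cond; rewrite -wc (wt3 sd cC) (wt_lt (eqP ci)) andbT /=.
apply/negP/negPn; apply: md => //; apply/eqP => c0; move: wpos; by rewrite -wc c0 wt_0.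
Qed.

Lemma alpha_eq (m : nat) (C : ternary_code (12 * m)) (i j : 'I_(12 * m)) :
  (0 < m)%N -> self_dual C -> (forall x, x \in C -> x != 0 -> (3 * m <= wt x)%N) ->
  alpha C i (3 * m) = alpha C j (3 * m).
Proof.
move=> m0 sd md.
pose e w : int := (alpha C i w)%:R - (alpha C j w)%:R.
have e0 : e (3 * m)%N = 0.
  apply: (@key m e (#|Cset C|)%:R m0).
  - rewrite ltr0n; apply/card_gt0P; exists 0; by rewrite inE mem0v.
  - move=> w; apply: contraR => cond.
    by rewrite /e (alpha_small i sd md cond) (alpha_small j sd md cond) subrr.
  have hi := per_i_w i sd; have hj := per_i_w j sd.
  rewrite /e; under eq_bigr do rewrite scalerBl.
  under [X in _ = _ *: ('X * X)]eq_bigr do rewrite scalerBl.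
  rewrite !sumrB mulrBr scalerBr [RHS]scalerBr -hi -hj !scaleNr.
  ring.
by move/eqP: e0; rewrite subr_eq0 eqr_nat => /eqP.
Qed.

Definition beta n (C : ternary_code n) (i : 'I_n) (w : nat) :=
  #|[set c in Cset C | (c 0 i != 0) && (wt c == w)]|.

Lemma A_sum n (C : ternary_code n) w : A_w C w = (\sum_(c in Cset C) (wt c == w))%N.
Proof. by rewrite sum_indic /A_w; apply: eq_card => c; rewrite !inE. Qed.

Lemma A_split n (C : ternary_code n) i w : A_w C w = (alpha C i w + beta C i w)%N.
Proof.
rewrite /alpha /beta -!sum_indic -big_split /= A_sum; apply: eq_bigr => c _.
by case: (c 0 i == 0); case: (wt c == w).
Qed.

Lemma beta_sum n (C : ternary_code n) w : (\sum_(i < n) beta C i w = w * A_w C w)%N.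
Proof.
rewrite /beta.
under eq_bigr => i _ do rewrite -sum_indic.
rewrite exchange_big /= A_sum big_distrr /=; apply: eq_bigr => c _.
case: (boolP (wt c == w)) => [/eqP <-|_]; last by rewrite muln0 big1 // => i _; rewrite andbF.
have -> : wt c = (\sum_(k in [set: 'I_n]) ((c 0%R k != 0%R) : nat))%N.
  by rewrite sum_indic /wt; apply: eq_card => k; rewrite !inE.
rewrite muln1; apply: eq_big => [i|i _]; first by rewrite inE.
by rewrite andbT.
Qed.

Lemma wt_opp n (c : 'rV[F3]_n) : wt (- c) = wt c.
Proof. by apply: eq_card => k; rewrite !inE mxE oppr_eq0. Qed.

Lemma beta_even n (C : ternary_code n) i w :
  beta C i w = (2 * #|[set c in Cset C | (c 0%R i == 1%R) && (wt c == w)]|)%N.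
Proof.
have e2 : #|[set c in Cset C | (c 0 i == 2) && (wt c == w)]|
        = #|[set c in Cset C | (c 0 i == 1) && (wt c == w)]|.
  rewrite -(card_imset _ (@oppr_inj _)); apply: eq_card => c.
  apply/imsetP/idP => [[c' + ->]|].
    rewrite !inE => /and3P [cC ci cw]; rewrite memvN cC mxE (eqP ci) wt_opp cw andbT.
    by [].
  rewrite !inE => /and3P [cC ci cw]; exists (- c); last by rewrite opprK.
  rewrite !inE memvN cC mxE (eqP ci) wt_opp cw andbT.
  by [].
rewrite mul2n -addnn -{2}e2 /beta -!sum_indic -big_split /=; apply: eq_bigr => c _.
by case/or3P: (F3_cases (c 0 i)) => /eqP ->; case: (wt c == w).
Qed.

Unset Implicit Arguments.
Local Close Scope ring_scope.

Theorem lemma3p1 (m : nat) (C : ternary_code (12 * m)) :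
  (0 < m)%N -> near_extremal C -> A_w C (3 * m) = 0 %[mod 8].
Proof.
move=> m0 [sd [_ md]].
have md' : forall x, x \in C -> x != 0%R -> (3 * m <= wt x)%N.
  by move=> x xC nx; have := md x xC nx; rewrite mulKn.
have i0 : 'I_(12 * m) by apply: (@Ordinal _ 0); lia.
have bi i : beta C i (3 * m) = beta C i0 (3 * m).
  by apply/eqP; rewrite -(eqn_add2l (alpha C i (3 * m))) {2}(alpha_eq i i0 m0 sd md') -!A_split.
have bs := beta_sum C (3 * m).
rewrite (eq_bigr (fun _ => beta C i0 (3 * m))) ?sum_nat_const ?card_ord in bs; last by move=> i _; exact: bi.
have A4 : A_w C (3 * m) = (4 * beta C i0 (3 * m))%N.
  have h : (3 * m * A_w C (3 * m) = 3 * m * (4 * beta C i0 (3 * m)))%N.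
    by rewrite -bs; nia.
  by move/eqP: h; rewrite eqn_mul2l => /orP [/eqP h|/eqP //]; lia.
by rewrite A4 beta_even mulnA mod0n modnMr.
Qed.
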